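(* Let $F(x)=x^{-1}$ on $GF(2^m)$ (i.e. $F(x)=x^{2^m-2}$, $F(0)=0$) and $S=STS(\mathcal H^n)$. If $m$ is odd, then at every nonzero point $a$ the self-embedding $S\cup F(S)$ has exactly $(2^m-2)/6$ rotation lines, each with $6$ points. If $m$ is even, then at every nonzero point there are exactly $(2^m-4)/6$ rotation lines with $6$ points each and one rotation line with $2$ points.
   Context: $n=2^m-1$. $S=STS(\mathcal H^n)$ is the set of 3-subsets $\{a,b,c\}$ of nonzero elements of $GF(2^m)$ with $a+b+c=0$; $F(S)=\{\{F(a),F(b),F(c)\}:\{a,b,c\}\in S\}$. For nonzero $a$, let $P_a=GF(2^m)\setminus\{0,a\}$, $s_a(y)=a+y$ and $\psi_a(y)=F(F^{-1}(a)+F^{-1}(y))$. The rotation lines at $a$ are the orbits on $P_a$ of the group generated by the involutions $s_a,\psi_a$; the number of points of a rotation line is the size of the orbit. *)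

(* Defs.v *)
From HB Require Import structures.
From mathcomp Require Import all_boot all_order all_algebra all_field.
Set Implicit Arguments. Unset Strict Implicit. Unset Printing Implicit Defensive.
Import GRing.Theory.
Local Open Scope ring_scope.

Section Rotation.
Variable K : finFieldType.

(* The inverse map F(x) = x^{-1}, F(0) = 0 (MathComp's 0^-1 = 0). *)
Definition Finv_map (x : K) : K := x^-1.

Definition Pa (a : K) : {set K} := [set y | (y != 0) && (y != a)].

Definition s_map (a y : K) : K := a + y.

(* psi_a(y) = F(F^{-1}(a) + F^{-1}(y)); here F = F^{-1} = inversion. *)
Definition psi_map (a y : K) : K := Finv_map (Finv_map a + Finv_map y).

Definition rot_step (a : K) : rel K :=
  fun y z => (z == s_map a y) || (z == psi_map a y).

(* orbit of y under the group generated by s_a and psi_a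
   (finite set, bijections: forward closure = group orbit) *)
Definition rot_line (a y : K) : {set K} := [set z | connect (rot_step a) y z].

Definition rot_lines (a : K) : {set {set K}} := [set rot_line a y | y in Pa a].
End Rotation.

(* Main.v *)
Require Import Defs.
From HB Require Import structures.
From mathcomp Require Import all_boot all_order all_algebra all_field all_fingroup all_solvable.
From mathcomp Require Import ring zify.
Local Open Scope ring_scope.
Import GRing.Theory.
Set Implicit Arguments. Unset Strict Implicit.

Ltac fs := field; try (repeat (apply/andP; split)); rewrite ?oppr_eq0 ?expf_neq0 ?mulf_neq0 ?invr_eq0 //.

Definition pq (K : fieldType) (a y : K) : K := (a^-1 - y^-1)^-1.

Definition Eseq (K : fieldType) (a y : K) : seq K :=
  [:: y; a - y; a^+2/y; a^+2/(a-y); a*y/(y-a); a*(y-a)/y].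

Definition Rp (K : fieldType) (a y : K) : K := y^+2 - a*y + a^+2.

Lemma pqK (K : fieldType) (a x : K) : pq a (pq a x) = x.
Proof. by rewrite /pq invrK opprB addrC subrK invrK. Qed.

Lemma step_eq (K : finFieldType) (h : 2%N \in [pchar K]) (a y z : K) :
  rot_step a y z = (z == a - y) || (z == pq a y).
Proof. by rewrite /rot_step /s_map /psi_map /Finv_map /pq !(GRing.subr_pchar2 h). Qed.

Lemma eq_from (K : fieldType) (x z N D : K) : x - z = N / D -> N = 0 -> x = z.
Proof. by move=> E N0; apply/eqP; rewrite -subr_eq0 E N0 mul0r. Qed.

Lemma neq_from (K : fieldType) (h2 : 2%:R = 0 :> K) (x z N D M Q : K) :
  N = (x - z) * D -> N - M = 2%:R * Q -> M != 0 -> x != z.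
Proof.
move=> EN EM M0; apply: contra M0 => /eqP xz; subst z.
by move: EM; rewrite EN subrr mul0r h2 mul0r sub0r => /eqP; rewrite oppr_eq0.
Qed.

Section Alg.
End Alg.

Lemma Eseq_s (K : fieldType) (a y x : K) : a != 0 -> y != 0 -> a - y != 0 ->
  x \in Eseq a y -> a - x \in Eseq a y.
Proof.
move=> ha hy hay; have hya : y - a != 0 by rewrite -oppr_eq0 opprB.
rewrite !inE => /orP[/eqP->|/orP[/eqP->|/orP[/eqP->|/orP[/eqP->|/orP[/eqP->|/eqP->]]]]].
- by rewrite eqxx ?orbT.
- by rewrite opprB addrC subrK eqxx.
- have -> : a - a^+2/y = a*(y-a)/y by fs.
  by rewrite eqxx ?orbT.
- have -> : a - a^+2/(a-y) = a*y/(y-a) by fs.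
  by rewrite eqxx ?orbT.
- have -> : a - a*y/(y-a) = a^+2/(a-y) by fs.
  by rewrite eqxx ?orbT.
- have -> : a - a*(y-a)/y = a^+2/y by fs.
  by rewrite eqxx ?orbT.
Qed.

Lemma pqE (K : fieldType) (a x : K) : a != 0 -> x != 0 -> pq a x = a*x/(x-a).
Proof.
move=> ha hx; rewrite /pq.
have -> : a^-1 - x^-1 = (x - a)/(a*x) by fs.
by rewrite invf_div.
Qed.

Lemma Eseq_p (K : fieldType) (a y x : K) : a != 0 -> y != 0 -> a - y != 0 ->
  x \in Eseq a y -> pq a x \in Eseq a y.
Proof.
move=> ha hy hay; have hya : y - a != 0 by rewrite -oppr_eq0 opprB.
have hy2 : a^+2 != 0 by rewrite expf_neq0.
rewrite !inE => /orP[/eqP->|/orP[/eqP->|/orP[/eqP->|/orP[/eqP->|/orP[/eqP->|/eqP->]]]]].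
- rewrite pqE //.
  by rewrite eqxx ?orbT.
- rewrite pqE //.
  have -> : (a-y)-a = -y by ring.
  have -> : a*(a-y)/(-y) = a*(y-a)/y by fs; rewrite oppr_eq0.
  by rewrite eqxx ?orbT.
- rewrite pqE ?mulf_neq0 ?invr_eq0 //.
  have -> : a*(a^+2/y)/(a^+2/y-a) = a^+2/(a-y).
    have -> : a^+2/y-a = a*(a-y)/y by fs.
    fs.
  by rewrite eqxx ?orbT.
- rewrite pqE ?mulf_neq0 ?invr_eq0 //.
  have -> : a*(a^+2/(a-y))/(a^+2/(a-y)-a) = a^+2/y.
    have -> : a^+2/(a-y)-a = a*y/(a-y) by fs.
    fs.
  by rewrite eqxx ?orbT.
- rewrite pqE ?mulf_neq0 ?invr_eq0 //.
  have -> : a*(a*y/(y-a))/(a*y/(y-a)-a) = y.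
    have -> : a*y/(y-a)-a = a^+2/(y-a) by fs.
    fs.
  by rewrite eqxx ?orbT.
- rewrite pqE ?mulf_neq0 ?invr_eq0 //.
  have -> : a*(a*(y-a)/y)/(a*(y-a)/y-a) = a - y.
    have -> : a*(y-a)/y-a = -(a^+2/y) by fs.
    fs.
  by rewrite eqxx ?orbT.
Qed.

Lemma rot_sym (K : finFieldType) (h : 2%N \in [pchar K]) (a : K) :
  symmetric (rot_step a).
Proof.
move=> y z; rewrite !(step_eq h); congr orb; apply/eqP/eqP => ->.
- by rewrite opprB addrC subrK.
- by rewrite opprB addrC subrK.
- by rewrite pqK.
- by rewrite pqK.
Qed.

Lemma rot_line_E (K : finFieldType) (h : 2%N \in [pchar K]) (a y : K) :
  a != 0 -> y \in Pa a -> rot_line a y = [set x in Eseq a y].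
Proof.
move=> ha; rewrite inE => /andP[hy hya']; have hay : a - y != 0.
  by rewrite subr_eq0 eq_sym.
have hya : y - a != 0 by rewrite -oppr_eq0 opprB.
have ss x : rot_step a x (a - x) by rewrite (step_eq h) eqxx.
have sp x : rot_step a x (pq a x) by rewrite (step_eq h) eqxx orbT.
apply/setP => z; rewrite !inE; apply/idP/idP.
- have cl : closed (rot_step a) (mem (Eseq a y)).
    move=> x w; rewrite (step_eq h) => /orP[/eqP->|/eqP->]; apply/idP/idP.
    + exact: Eseq_s.
    + by move/(Eseq_s ha hy hay); rewrite opprB addrC subrK.
    + exact: Eseq_p.
    + by move/(Eseq_p ha hy hay); rewrite pqK.
  move=> C; have := closed_connect cl C; rewrite !inE eqxx /= => <-.
  done.
- have e5 : pq a y = a*y/(y-a) by rewrite pqE.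
  have e6 : pq a (a - y) = a*(y-a)/y.
    rewrite pqE //; have -> : (a-y)-a = -y by ring.
    by fs.
  have e4 : a - pq a y = a^+2/(a-y) by rewrite e5; fs.
  have e3 : a - pq a (a - y) = a^+2/y by rewrite e6; fs.
  move=> /orP[/eqP->|/orP[/eqP->|/orP[/eqP->|/orP[/eqP->|/orP[/eqP->|/eqP->]]]]].
  + exact: connect0.
  + exact: connect1.
  + rewrite -e3; apply: connect_trans (connect1 (ss _)) _.
    by apply: connect_trans (connect1 (sp _)) (connect1 (ss _)).
  + rewrite -e4; exact: connect_trans (connect1 (sp _)) (connect1 (ss _)).
  + rewrite -e5; exact: connect1.
  + rewrite -e6; exact: connect_trans (connect1 (ss _)) (connect1 (sp _)).
Qed.

Lemma root_eqs (K : fieldType) (a y : K) :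
  a != 0 -> y != 0 -> a - y != 0 -> Rp a y = 0 ->
  [/\ a^+2/y = a - y, a^+2/(a-y) = y, a*y/(y-a) = a - y & a*(y-a)/y = y].
Proof.
move=> ha hy hay.
have hya : y - a != 0 by rewrite -oppr_eq0 opprB.
have i3 : a^+2/y - (a - y) = Rp a y / y by rewrite /Rp; fs.
have i4 : a^+2/(a-y) - y = Rp a y / (a - y) by rewrite /Rp; fs.
have i5 : a*y/(y-a) - (a - y) = Rp a y / (y - a) by rewrite /Rp; fs.
have i6 : a*(y-a)/y - y = - Rp a y / y by rewrite /Rp; fs.
move=> R0; split; first exact: eq_from i3 R0.
- exact: eq_from i4 R0.
- exact: eq_from i5 R0.
- by apply: (eq_from i6); rewrite R0 oppr0.
Qed.

Lemma card_E_root (K : finFieldType) (h : 2%N \in [pchar K]) (a y : K) :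
  a != 0 -> y \in Pa a -> Rp a y = 0 -> #|[set x in Eseq a y]| = 2%N.
Proof.
move=> ha; rewrite inE => /andP[hy hya']; have hay : a - y != 0.
  by rewrite subr_eq0 eq_sym.
move=> R0; have [e3 e4 e5 e6] := root_eqs ha hy hay R0.
have -> : [set x in Eseq a y] = [set x in [:: y; a - y]].
  apply/setP => x; rewrite !inE e3 e4 e5 e6.
  by case: (x == y); case: (x == a - y).
rewrite cardsE; apply/card_uniqP; rewrite /= inE andbT.
apply: contra ha => /eqP E; move: (f_equal (fun u => u + y) E).
by rewrite subrK (GRing.addrr_pchar2 h) => ->.
Qed.

Lemma E_uniq (K : fieldType) (h2 : 2%:R = 0 :> K) (a y : K) :
  a != 0 -> y != 0 -> a - y != 0 -> Rp a y != 0 -> uniq (Eseq a y).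
Proof.
move=> ha hy hay hR.
have hya : y - a != 0 by rewrite -oppr_eq0 opprB.
have d1 : y != a - y.
  apply: (neq_from h2 (N:=2%:R*y - a) (D:=1) (M:=-a) (Q:=y)).
  - by rewrite /Rp; fs.
  - by rewrite /Rp; ring.
  - by rewrite ?oppr_eq0 ?mulf_neq0 ?expf_neq0.
have d2 : y != a^+2/y.
  apply: (neq_from h2 (N:=y^+2 - a^+2) (D:=y) (M:=(y-a)^+2) (Q:=a*y - a^+2)).
  - by rewrite /Rp; fs.
  - by rewrite /Rp; ring.
  - by rewrite ?oppr_eq0 ?mulf_neq0 ?expf_neq0.
have d3 : y != a^+2/(a-y).
  apply: (neq_from h2 (N:=a*y-y^+2-a^+2) (D:=a-y) (M:=-Rp a y) (Q:=0)).
  - by rewrite /Rp; fs.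
  - by rewrite /Rp; ring.
  - by rewrite ?oppr_eq0 ?mulf_neq0 ?expf_neq0.
have d4 : y != a*y/(y-a).
  apply: (neq_from h2 (N:=y^+2-2%:R*a*y) (D:=y-a) (M:=y^+2) (Q:=-(a*y))).
  - by rewrite /Rp; fs.
  - by rewrite /Rp; ring.
  - by rewrite ?oppr_eq0 ?mulf_neq0 ?expf_neq0.
have d5 : y != a*(y-a)/y.
  apply: (neq_from h2 (N:=Rp a y) (D:=y) (M:=Rp a y) (Q:=0)).
  - by rewrite /Rp; fs.
  - by rewrite /Rp; ring.
  - by rewrite ?oppr_eq0 ?mulf_neq0 ?expf_neq0.
have d6 : a - y != a^+2/y.
  apply: (neq_from h2 (N:=a*y-y^+2-a^+2) (D:=y) (M:=-Rp a y) (Q:=0)).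
  - by rewrite /Rp; fs.
  - by rewrite /Rp; ring.
  - by rewrite ?oppr_eq0 ?mulf_neq0 ?expf_neq0.
have d7 : a - y != a^+2/(a-y).
  apply: (neq_from h2 (N:=y^+2-2%:R*a*y) (D:=a-y) (M:=y^+2) (Q:=-(a*y))).
  - by rewrite /Rp; fs.
  - by rewrite /Rp; ring.
  - by rewrite ?oppr_eq0 ?mulf_neq0 ?expf_neq0.
have d8 : a - y != a*y/(y-a).
  apply: (neq_from h2 (N:=-Rp a y) (D:=y-a) (M:=-Rp a y) (Q:=0)).
  - by rewrite /Rp; fs.
  - by rewrite /Rp; ring.
  - by rewrite ?oppr_eq0 ?mulf_neq0 ?expf_neq0.
have d9 : a - y != a*(y-a)/y.
  apply: (neq_from h2 (N:=a^+2-y^+2) (D:=y) (M:=(a-y)^+2) (Q:=a*y-y^+2)).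
  - by rewrite /Rp; fs.
  - by rewrite /Rp; ring.
  - by rewrite ?oppr_eq0 ?mulf_neq0 ?expf_neq0.
have d10 : a^+2/y != a^+2/(a-y).
  apply: (neq_from h2 (N:=a^+3-2%:R*a^+2*y) (D:=y*(a-y)) (M:=a^+3) (Q:=-(a^+2*y))).
  - by rewrite /Rp; fs.
  - by rewrite /Rp; ring.
  - by rewrite ?oppr_eq0 ?mulf_neq0 ?expf_neq0.
have d11 : a^+2/y != a*y/(y-a).
  apply: (neq_from h2 (N:=-(a*Rp a y)) (D:=y*(y-a)) (M:=-(a*Rp a y)) (Q:=0)).
  - by rewrite /Rp; fs.
  - by rewrite /Rp; ring.
  - by rewrite ?oppr_eq0 ?mulf_neq0 ?expf_neq0.
have d12 : a^+2/y != a*(y-a)/y.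
  apply: (neq_from h2 (N:=2%:R*a^+2 - a*y) (D:=y) (M:=-(a*y)) (Q:=a^+2)).
  - by rewrite /Rp; fs.
  - by rewrite /Rp; ring.
  - by rewrite ?oppr_eq0 ?mulf_neq0 ?expf_neq0.
have d13 : a^+2/(a-y) != a*y/(y-a).
  apply: (neq_from h2 (N:=a^+2+a*y) (D:=a-y) (M:=a*(a-y)) (Q:=a*y)).
  - by rewrite /Rp; fs.
  - by rewrite /Rp; ring.
  - by rewrite ?oppr_eq0 ?mulf_neq0 ?expf_neq0.
have d14 : a^+2/(a-y) != a*(y-a)/y.
  apply: (neq_from h2 (N:=a*Rp a y) (D:=y*(a-y)) (M:=a*Rp a y) (Q:=0)).
  - by rewrite /Rp; fs.
  - by rewrite /Rp; ring.
  - by rewrite ?oppr_eq0 ?mulf_neq0 ?expf_neq0.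
have d15 : a*y/(y-a) != a*(y-a)/y.
  apply: (neq_from h2 (N:=2%:R*a^+2*y - a^+3) (D:=y*(y-a)) (M:=-(a^+3)) (Q:=a^+2*y)).
  - by rewrite /Rp; fs.
  - by rewrite /Rp; ring.
  - by rewrite ?oppr_eq0 ?mulf_neq0 ?expf_neq0.
by rewrite /= !inE !negb_or d1 d2 d3 d4 d5 d6 d7 d8 d9 d10 d11 d12 d13 d14 d15.
Qed.

Lemma Pa_closed (K : finFieldType) (h : 2%N \in [pchar K]) (a : K) :
  a != 0 -> closed (rot_step a) (mem (Pa a)).
Proof.
move=> ha y z; rewrite (step_eq h) => /orP[/eqP->|/eqP->]; rewrite !inE.
- have -> : (a - y == a) = (y == 0) by rewrite -subr_eq0 addrAC subrr add0r oppr_eq0.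
  by rewrite subr_eq0 andbC eq_sym.
- have e1 : ((a^-1 - y^-1)^-1 == 0) = (y == a).
    by rewrite invr_eq0 subr_eq0 (inj_eq invr_inj) eq_sym.
  have e2 : ((a^-1 - y^-1)^-1 == a) = (y == 0).
    rewrite -[X in _ == X]invrK (inj_eq invr_inj).
    by rewrite -subr_eq0 addrAC subrr add0r oppr_eq0 invr_eq0.
  by rewrite /pq e1 e2 andbC.
Qed.

Lemma line_eq (K : finFieldType) (h : 2%N \in [pchar K]) (a y z : K) :
  connect (rot_step a) y z -> rot_line a y = rot_line a z.
Proof.
move=> C; apply/setP => w; rewrite !inE.
exact: (same_connect (sym_connect_sym (rot_sym h a)) C).
Qed.

Lemma rot_partition (K : finFieldType) (h : 2%N \in [pchar K]) (a : K) :
  a != 0 -> partition (rot_lines a) (Pa a).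
Proof.
move=> ha; apply/and3P; split.
- apply/eqP/setP => z; rewrite /rot_lines cover_imset; apply/bigcupP/idP.
  + move=> [y yP]; rewrite inE => C.
    by have := closed_connect (Pa_closed h ha) C; rewrite !inE => <-; move: yP; rewrite inE.
  + by move=> zP; exists z => //; rewrite inE connect0.
- apply/trivIsetP => A B /imsetP[y1 _ ->] /imsetP[y2 _ ->] neq.
  rewrite -setI_eq0; apply: contraR neq => /set0Pn [z]; rewrite !inE => /andP[z1 z2].
  by rewrite (line_eq h z1) (line_eq h z2).
- apply/imsetP => [[y _ E]].
  by have := in_set0 y; rewrite E inE connect0.
Qed.

Lemma Pa_card (K : finFieldType) (a : K) : a != 0 -> #|Pa a| = (#|K| - 2)%N.
Proof.
move=> ha.
have -> : Pa a = ([set: K] :\ 0) :\ a.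
  by apply/setP => z; rewrite !inE andbT andbC.
have := cardsD1 0 [set: K]; have := cardsD1 a ([set: K] :\ 0).
rewrite cardsT !inE ha /= => ->; rewrite /=; move=> ->; by rewrite !add1n subn2.
Qed.

Lemma line_card (K : finFieldType) (h : 2%N \in [pchar K]) (a y : K) :
  a != 0 -> y \in Pa a -> #|rot_line a y| = if Rp a y == 0 then 2%N else 6%N.
Proof.
move=> ha yP; rewrite (rot_line_E h ha yP).
case: eqP => [R0|/eqP R0]; first exact: card_E_root.
move: yP; rewrite inE => /andP[hy hya'].
have hay : a - y != 0 by rewrite subr_eq0 eq_sym.
rewrite cardsE; apply/card_uniqP.
exact: (E_uniq (pcharf0 h)).
Qed.

Lemma noroot_odd (K : finFieldType) (h : 2%N \in [pchar K]) (m : nat) (a y : K) :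
  #|K| = (2 ^ m)%N -> odd m -> a != 0 -> y != 0 -> Rp a y = 0 -> y = a.
Proof.
move=> hK om ha hy R0.
set t := y / a.
have ht0 : t != 0 by rewrite mulf_neq0 ?invr_eq0.
have E : Rp a y = a^+2 * (t^+2 - t + 1) by rewrite /t /Rp; field.
have T0 : t^+2 - t + 1 = 0.
  by move: R0; rewrite E => /eqP; rewrite mulf_eq0 expf_eq0 (negbTE ha) /= => /eqP.
have T3 : t^+3 = 1.
  have : t^+3 + 1 = (t + 1) * (t^+2 - t + 1) by ring.
  rewrite T0 mulr0 => /eqP; rewrite addr_eq0 => /eqP ->.
  by rewrite (GRing.oppr_pchar2 h).
have M3 : (2 ^ m %% 3 = 2)%N.
  have -> : m = (2 * m./2).+1 by rewrite -[m in LHS]odd_double_half om add1n -muln2 mulnC.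
  rewrite expnS expnM -modnMmr -modnXm.
  by have -> : (2^2 %% 3 = 1)%N by []; rewrite exp1n.
have := expf_card t.
rewrite hK {1}(divn_eq (2 ^ m) 3) M3 exprD exprM exprAC T3 expr1n mul1r => E2.
have : t * (t - 1) = 0 by rewrite mulrBr mulr1 -expr2 E2 subrr.
move/eqP; rewrite mulf_eq0 (negbTE ht0) subr_eq0 /= => /eqP t1.
by move: t1; rewrite /t => /(congr1 (fun u => u * a)); rewrite mul1r divfK.
Qed.

Lemma root_even (K : finFieldType) (h : 2%N \in [pchar K]) (m : nat) (a : K) :
  #|K| = (2 ^ m)%N -> ~~ odd m -> a != 0 -> exists2 y, y \in Pa a & Rp a y = 0.
Proof.
move=> hK em ha.
have d3 : (3 %| #|[set: {unit K}]|)%N.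
  rewrite card_finField_unit hK.
  have gt1 := card_finNzRing_gt1 K; rewrite hK in gt1.
  have -> : m = (2 * m./2)%N by rewrite -[m in LHS]odd_double_half (negbTE em) add0n -muln2 mulnC.
  rewrite expnM.
  rewrite -subn1 -(eqn_mod_dvd _ _) ?expn_gt0 //.
  rewrite -modnXm.
  by have -> : (2^2 %% 3 = 1)%N by []; rewrite exp1n.
have [x _ ox] := Cauchy (G := [set: {unit K}]%G) (isT : prime 3) d3.
set w := val x.
have w3 : w^+3 = 1.
  by rewrite /w -FinRing.val_unitX -ox expg_order.
have w1 : w != 1.
  apply/eqP => w1; have : x = 1%g by apply: val_inj.
  by move/eqP; rewrite -order_eq1 ox.
have w0 : w != 0 by apply: contra_eq_neq w3 => ->; rewrite expr0n /= eq_sym oner_eq0.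
have W : w^+2 + w + 1 = 0.
  have : (w - 1) * (w^+2 + w + 1) = w^+3 - 1 by ring.
  rewrite w3 subrr => /eqP; rewrite mulf_eq0 subr_eq0 (negbTE w1) /= => /eqP.
  done.
exists (a * w).
  rewrite inE mulf_neq0 //=; apply: contra w1 => /eqP aw.
  by apply/eqP; apply: (mulfI ha); rewrite mulr1.
have -> : Rp a (a * w) = a^+2 * (w^+2 - w + 1) by rewrite /Rp; ring.
by rewrite (GRing.subr_pchar2 h) W mulr0.
Qed.

Theorem mainTheorem14 (K : finFieldType) (m : nat)
  (hchar : (2%N \in [pchar K])) (hcard : #|K| = (2 ^ m)%N) :
  forall a : K, a != 0 ->
    (odd m ->
       #|rot_lines a| = ((2 ^ m - 2) %/ 6)%N /\
       (forall L, L \in rot_lines a -> #|L| = 6%N)) /\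
    (~~ odd m ->
       #|[set L in rot_lines a | #|L| == 6%N]| = ((2 ^ m - 4) %/ 6)%N /\
       #|[set L in rot_lines a | #|L| == 2%N]| = 1%N /\
       (forall L, L \in rot_lines a -> (#|L| == 6%N) || (#|L| == 2%N))).
Proof.
move=> a ha.
have hP := rot_partition hchar ha.
have Hsum : (2 ^ m - 2 = \sum_(L in rot_lines a) #|L|)%N.
  by rewrite -(card_partition hP) Pa_card // hcard.
split.
- move=> om.
  have all6 : forall L, L \in rot_lines a -> #|L| = 6%N.
    move=> L /imsetP[y yP ->]; rewrite line_card //.
    case: ifP => [/eqP R0|//]; move: (yP); rewrite inE => /andP[hy /eqP].
    by rewrite (noroot_odd hchar hcard om ha hy R0).
  split=> //.
  by rewrite Hsum (eq_bigr (fun _ => 6%N) all6) sum_nat_const mulnK.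
- move=> em; have [y0 y0P R0] := root_even hchar hcard em ha.
  have opt : forall L, L \in rot_lines a -> (#|L| == 6%N) || (#|L| == 2%N).
    by move=> L /imsetP[y yP ->]; rewrite line_card //; case: ifP.
  have P2 : [set L in rot_lines a | #|L| == 2%N] = [set rot_line a y0].
    apply/setP => L; rewrite !inE; apply/andP/eqP.
    + move=> [/imsetP[y yP ->]]; rewrite line_card //; case: ifP => [/eqP R1 _|//].
      have : (y - y0) * (y + y0 - a) = Rp a y - Rp a y0 by rewrite /Rp; ring.
      rewrite R1 R0 subrr => /eqP; rewrite mulf_eq0 => /orP[|] /eqP e.
      * by move/eqP: e; rewrite subr_eq0 => /eqP ->.
      * have -> : y = a - y0.
          by apply/eqP; rewrite -subr_eq0 -[X in _ == X]e; apply/eqP; ring.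
        symmetry; apply: (line_eq hchar); apply: connect1.
        by rewrite (step_eq hchar) eqxx.
    + move=> ->; split; first by apply/imsetP; exists y0.
      by rewrite line_card // R0 eqxx.
  have N2 : #|[set L in rot_lines a | #|L| == 2%N]| = 1%N by rewrite P2 cards1.
  split; last by split.
  move: Hsum; rewrite (bigID (fun L : {set K} => #|L| == 6%N)) /=.
  rewrite (eq_bigr (fun _ => 6%N)); last by move=> L /andP[_ /eqP].
  rewrite (eq_bigl (fun L => L \in [set L in rot_lines a | #|L| == 6%N])); last first.
    by move=> L; rewrite inE.
  rewrite sum_nat_const.
  rewrite (eq_bigr (fun _ => 2%N)); last first.
    move=> L /andP[LP n6]; by have := opt L LP; rewrite (negbTE n6) /= => /eqP.
  rewrite (eq_bigl (fun L => L \in [set L in rot_lines a | #|L| == 2%N])); last first.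
    move=> L; rewrite inE; case LP : (L \in rot_lines a) => //=.
    by have := opt L LP; case/orP => /eqP ->.
  rewrite sum_nat_const N2 => E.
  have -> : (2 ^ m - 4 = #|[set L in rot_lines a | #|L| == 6%N]| * 6)%N by lia.
  by rewrite mulnK.
Qed.
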